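(* There exist instances (a graph with fixed nonnegative embedding weights, features and binary labels) for which the gap between (i) the best accuracy achievable by a linear graph-based classifier on non-strategic data and (ii) the best accuracy achievable by a linear graph-based classifier on strategic data is at least $30\%$ (i.e., at least $0.3$ in accuracy).
   Context: Users $i\in[n]$ have features $x_i\in\mathbb{R}^\ell$ and labels $y_i\in\{\pm1\}$; embeddings $\phi(x_i;x_{-i})=\widetilde{w}_{ii}x_i+\sum_{j\neq i}\widetilde{w}_{ji}x_j$ with fixed $\widetilde{w}_{ji}\ge0$. Classifiers: $h_{\theta,b}(x_i;x_{-i})=\mathrm{sign}(\theta^\top\phi(x_i;x_{-i})+b)$, $\mathrm{sign}(0)=+1$, over all $\theta\in\mathbb{R}^\ell,b\in\mathbb{R}$. Cost $c(x,x')=\|x-x'\|_2$. Strategic data: users respond to $h$ by myopic best-response dynamics ($x_i^{(0)}=x_i$; at each round all users update concurrently; user $i$ changes her features only if currently classified $-1$ and some $x'$ with $h(x';x_{-i})=+1$, with others' current features, has cost $\le 2$, in which case she moves to the minimum-cost such point), run until convergence, yielding $x^h$. Non-strategic accuracy of $h$: $\frac1n|\{i:h(x_i;x_{-i})=y_i\}|$; strategic accuracy: $\frac1n|\{i:h(x^h_i;x^h_{-i})=y_i\}|$. *)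

(* Defs.v *)
From HB Require Import structures.
From mathcomp Require Import all_boot all_order all_algebra.
From mathcomp Require Import reals Rstruct.
From Stdlib Require Import Rdefinitions.
Set Implicit Arguments. Unset Strict Implicit. Unset Printing Implicit Defensive.
Import Order.TTheory GRing.Theory Num.Theory.
Local Open Scope ring_scope.

Definition vec (l : nat) := 'I_l -> R.
Definition profile (n l : nat) := 'I_n -> vec l.

Definition dot (l : nat) (u v : vec l) : R := \sum_(k < l) u k * v k.
Definition cost (l : nat) (u v : vec l) : R :=
  Num.sqrt (\sum_(k < l) (u k - v k) ^+ 2).

(* w j i = \tilde w_{ji}; embedding phi(x_i; x_{-i}) = sum_j w_{ji} x_j
   (the j = i term is \tilde w_{ii} x_i) *)
Definition embed (n l : nat) (w : 'I_n -> 'I_n -> R) (X : profile n l) (i : 'I_n)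
  : vec l := fun k => \sum_(j < n) w j i * X j k.

(* h_{theta,b}(x_i; x_{-i}) = +1  iff  theta^T phi + b >= 0  (sign 0 = +1);
   the prediction is encoded as a bool: true = +1, false = -1 *)
Definition classify (n l : nat) (w : 'I_n -> 'I_n -> R) (theta : vec l) (b : R)
  (X : profile n l) (i : 'I_n) : bool :=
  0 <= dot theta (embed w X i) + b.

Definition upd (n l : nat) (X : profile n l) (i : 'I_n) (z : vec l) : profile n l :=
  fun j => if j == i then z else X j.

Definition best_resp (n l : nat) (w : 'I_n -> 'I_n -> R) (theta : vec l) (b : R)
  (X : profile n l) (i : 'I_n) (z : vec l) : Prop :=
  classify w theta b (upd X i z) i /\
  forall z', classify w theta b (upd X i z') i -> cost (X i) z <= cost (X i) z'.

(* one round of concurrent myopic best responses with budget 2 *)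
Definition can_move (n l : nat) (w : 'I_n -> 'I_n -> R) (theta : vec l) (b : R)
  (X : profile n l) (i : 'I_n) : Prop :=
  ~~ classify w theta b X i /\
  exists z : vec l, classify w theta b (upd X i z) i /\ cost (X i) z <= 2.

Definition br_step (n l : nat) (w : 'I_n -> 'I_n -> R) (theta : vec l) (b : R)
  (X X' : profile n l) : Prop :=
  forall i : 'I_n,
    (can_move w theta b X i -> best_resp w theta b X i (X' i)) /\
    (~ can_move w theta b X i -> X' i = X i).

Definition strat_outcome (n l : nat) (w : 'I_n -> 'I_n -> R) (theta : vec l) (b : R)
  (x xs : profile n l) : Prop :=
  exists traj : nat -> profile n l,
    traj 0%N = x /\
    (forall t, br_step w theta b (traj t) (traj t.+1)) /\
    exists T : nat, forall t : nat, leq T t -> traj t = xs.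

Definition accuracy (n l : nat) (w : 'I_n -> 'I_n -> R) (theta : vec l) (b : R)
  (y : 'I_n -> bool) (X : profile n l) : R :=
  (#|[set i : 'I_n | classify w theta b X i == y i]|)%:R / n%:R.

(* Main.v *)
Require Import Defs.
From mathcomp Require Import all_boot all_order all_algebra.
From mathcomp Require Import reals Rstruct.
From Stdlib Require Import Rdefinitions.
From Stdlib Require Import Classical.
From mathcomp Require Import lra.
Import Order.TTheory GRing.Theory Num.Theory.
Local Open Scope ring_scope.

Definition iM : 'I_3 := @Ordinal 3 0 isT.
Definition iA : 'I_3 := @Ordinal 3 1 isT.
Definition iB : 'I_3 := @Ordinal 3 2 isT.
Definition ww (j i : 'I_3) : R :=
  if ((val j == 0%N) && (val i == 0%N)) || ((val j == 2%N) && (val i == 1%N))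
     || ((val j == 1%N) && (val i == 2%N)) then 1 else 0.
Definition xx : profile 3 1 := fun i _ =>
  if val i == 1%N then 1 else if val i == 2%N then -1 else 0.
Definition yy (i : 'I_3) : bool := val i == 1%N.

Lemma ord3 (i : 'I_3) : i = iM \/ i = iA \/ i = iB.
Proof.
case: i => [[|[|[|i]]] Hi].
- by left; apply/val_inj.
- by right; left; apply/val_inj.
- by right; right; apply/val_inj.
- by [].
Qed.

Lemma embM (X : profile 3 1) k : embed ww X iM k = X iM k.
Proof. rewrite /embed !big_ord_recl big_ord0 /ww /=.
have -> : ord0 = iM by apply/val_inj. by rewrite !mul0r mul1r !addr0. Qed.
Lemma embA (X : profile 3 1) k : embed ww X iA k = X iB k.
Proof. rewrite /embed !big_ord_recl big_ord0 /ww /=.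
have -> : lift ord0 (lift ord0 (@ord0 0)) = iB by apply/val_inj.
by rewrite !mul0r mul1r !addr0 !add0r. Qed.
Lemma embB (X : profile 3 1) k : embed ww X iB k = X iA k.
Proof. rewrite /embed !big_ord_recl big_ord0 /ww /=.
have -> : lift ord0 (@ord0 1) = iA by apply/val_inj.
by rewrite !mul0r mul1r !addr0 !add0r. Qed.

Lemma RdivE (a c : R) : Rdiv a c = a / c.
Proof. by []. Qed.

Lemma dot1 (u v : vec 1) : dot u v = u ord0 * v ord0.
Proof. by rewrite /dot big_ord1. Qed.
Lemma cost1 (u v : vec 1) : cost u v = `|u ord0 - v ord0|.
Proof. by rewrite /cost big_ord1 sqrtr_sqr. Qed.

Section S.
Variables (th : vec 1) (b : R).
Local Notation t0 := (th ord0).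

Lemma clM X : classify ww th b X iM = (0 <= t0 * X iM ord0 + b).
Proof. by rewrite /classify dot1 embM. Qed.
Lemma clA X : classify ww th b X iA = (0 <= t0 * X iB ord0 + b).
Proof. by rewrite /classify dot1 embA. Qed.
Lemma clB X : classify ww th b X iB = (0 <= t0 * X iA ord0 + b).
Proof. by rewrite /classify dot1 embB. Qed.

Lemma nomoveA X : ~ can_move ww th b X iA.
Proof. move=> [H [z [Hz _]]]; move: H Hz; rewrite !clA /upd /=. by move=> /negbTE ->. Qed.
Lemma nomoveB X : ~ can_move ww th b X iB.
Proof. move=> [H [z [Hz _]]]; move: H Hz; rewrite !clB /upd /=. by move=> /negbTE ->. Qed.

Lemma can_moveM X : can_move ww th b X iM <->
  (~~ (0 <= t0 * X iM ord0 + b) /\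
   exists z : vec 1, 0 <= t0 * z ord0 + b /\ `|X iM ord0 - z ord0| <= 2).
Proof.
rewrite /can_move clM; split => [[H [z [Hz Hc]]]|[H [z [Hz Hc]]]]; split => //;
  exists z; move: Hz Hc; by rewrite clM cost1 /upd /=.
Qed.

Lemma stepP X X' : br_step ww th b X X' ->
  [/\ X' iA = X iA, X' iB = X iB,
      (0 <= t0 * X iM ord0 + b -> X' iM = X iM),
      (can_move ww th b X iM -> 0 <= t0 * X' iM ord0 + b) &
      (X' iM = X iM \/ 0 <= t0 * X' iM ord0 + b)].
Proof.
move=> H.
have hM : can_move ww th b X iM -> 0 <= t0 * X' iM ord0 + b.
  by move=> Hc; case: ((H iM).1 Hc) => + _; rewrite clM /upd /=.
split.
- by apply: (H iA).2; apply: nomoveA.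
- by apply: (H iB).2; apply: nomoveB.
- move=> Hc; apply: (H iM).2 => /can_moveM [Hn _]; by rewrite Hc in Hn.
- exact: hM.
- case: (classic (can_move ww th b X iM)) => Hc; first by right; apply: hM.
  by left; apply: (H iM).2.
Qed.

Lemma stay X : (forall i, ~ can_move ww th b X i) -> br_step ww th b X X.
Proof. by move=> H i; split => // /H. Qed.

End S.
Arguments stepP {th b X X'}.

Theorem proposition5 :
  exists (n l : nat) (w : 'I_n -> 'I_n -> R) (x : profile n l) (y : 'I_n -> bool),
    (forall i j : 'I_n, 0 <= w i j) /\
    (* the best-response dynamics converge for every linear classifier *)
    (forall (theta : vec l) (b : R), exists xs, strat_outcome w theta b x xs) /\
    (* some classifier's non-strategic accuracy exceeds every classifier's
       strategic accuracy by at least 0.3 *)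
    exists (theta0 : vec l) (b0 : R),
      forall (theta : vec l) (b : R) (xs : profile n l),
        strat_outcome w theta b x xs ->
        accuracy w theta b y xs + 3 / 10 <= accuracy w theta0 b0 y x.
Proof.
exists 3%N, 1%N, ww, xx, yy.
have xM : xx iM ord0 = 0 by [].
have xA : xx iA ord0 = 1 by [].
have xB : xx iB ord0 = -1 by [].
split; first by move=> i j; rewrite /ww; case: ifP => _ //; lra.
split.
  move=> th b.
  case: (classic (can_move ww th b xx iM)) => Hc; last first.
    exists xx, (fun _ => xx); split => //; split; last by exists 0%N.
    move=> _; apply: stay => i; have [->|[->|->]] := ord3 i => //.
    - exact: nomoveA.
    - exact: nomoveB.
  have [Hn [z [Hz _]]] := (can_moveM th b xx).1 Hc.
  rewrite xM mulr0 add0r -ltNge in Hn.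
  have t0n : th ord0 != 0.
    by apply/eqP => E; rewrite E mul0r add0r in Hz; lra.
  pose zs : vec 1 := fun _ => - b / th ord0.
  have czs : 0 <= th ord0 * zs ord0 + b.
    by rewrite /zs mulrC divfK //; lra.
  pose xs := upd xx iM zs.
  have xsM : xs iM = zs by rewrite /xs /upd eqxx.
  exists xs, (fun t => if t is 0%N then xx else xs); split => //; split; last first.
    by exists 1%N => -[|t].
  move=> [|t]; last first.
    apply: stay => i; have [->|[->|->]] := ord3 i.
    - by move/can_moveM => [+ _]; rewrite xsM czs.
    - exact: nomoveA.
    - exact: nomoveB.
  move=> i; have [->|[->|->]] := ord3 i.
  - split=> // _; rewrite xsM; split; first by rewrite clM /upd eqxx.
    move=> z'; rewrite clM /upd eqxx !cost1 xM !sub0r !normrN => Hz'.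
    rewrite /zs normrM normrV ?unitfE // normrN ler_pdivrMr ?normr_gt0 //.
    rewrite -normrM; apply: (le_trans (_ : _ <= th ord0 * z' ord0)).
      by rewrite ler0_norm; lra.
    by rewrite mulrC; apply: ler_norm.
  - by split => // /nomoveA.
  - by split => // /nomoveB.
pose b0 := @GRing.mul R (-1) (2^-1).
exists (fun _ => -1), b0.
have acc1 : accuracy ww (fun _ => -1) b0 yy xx = 1.
  rewrite /accuracy.
  have -> : [set i | classify ww (fun _ => -1) b0 xx i == yy i] = setT.
    apply/setP => i; rewrite !inE; have [->|[->|->]] := ord3 i.
    - rewrite clM xM /yy /=; apply/eqP/negbTE; rewrite -ltNge. rewrite /b0; lra.
    - rewrite clA xB /yy /=; have h : 0 <= -1 * -1 + b0 by rewrite /b0; lra.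
      by rewrite h.
    - rewrite clB xA /yy /=; apply/eqP/negbTE; rewrite -ltNge; rewrite /b0; lra.
  rewrite cardsT card_ord RdivE; lra.
rewrite acc1 => th b xs [traj [H0 [Hst [T HT]]]].
have HAB : forall t, traj t iA = xx iA /\ traj t iB = xx iB.
  elim=> [|t [IHa IHb]]; first by rewrite H0.
  by case: (stepP (Hst t)) => -> -> _ _ _.
have HM : forall t, traj t iM = xx iM \/ 0 <= th ord0 * traj t iM ord0 + b.
  elim=> [|t IH]; first by left; rewrite H0.
  case: (stepP (Hst t)) => _ _ _ _ [->|]; [exact: IH|by right].
have Hp : forall t, 0 <= th ord0 * traj t iM ord0 + b ->
                    0 <= th ord0 * traj t.+1 iM ord0 + b.
  by move=> t h; case: (stepP (Hst t)) => _ _ /(_ h) -> _ _.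
have [i0 Hi0] : exists i0, classify ww th b xs i0 != yy i0.
  case Ha : (classify ww th b xs iA); last by exists iA; rewrite Ha.
  case Hm : (classify ww th b xs iM); first by exists iM; rewrite Hm.
  exfalso.
  have xsT : xs = traj T by rewrite HT.
  move: Ha Hm; rewrite clA clM xsT (HAB T).2 xB => Ha Hm.
  have E : traj T iM = xx iM by case: (HM T) => // h; rewrite h in Hm.
  rewrite E xM mulr0 add0r in Hm; move/negbT: Hm; rewrite -ltNge => Hb.
  have Hc : can_move ww th b (traj 0%N) iM.
    rewrite H0; apply/can_moveM; split.
      by rewrite xM mulr0 add0r -ltNge.
    exists (fun _ => -1); split => //; rewrite xM sub0r opprK normr1; lra.
  have H1 : forall k, 0 <= th ord0 * traj k.+1 iM ord0 + b.
    elim=> [|k IH]; last exact: Hp.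
    by case: (stepP (Hst 0%N)) => _ _ _ /(_ Hc).
  have := H1 T; rewrite (HT T.+1 (leqnSn T)) xsT E xM mulr0 add0r; lra.
have Hsub : [set i | classify ww th b xs i == yy i] \subset [set~ i0].
  apply/subsetP => i; rewrite !inE => /eqP Hi; apply/eqP => Hii.
  by move: Hi0; rewrite -Hii Hi eqxx.
have Hk : leq #|[set i | classify ww th b xs i == yy i]| 2.
  by apply: leq_trans (subset_leq_card Hsub) _; rewrite cardsC1 card_ord.
rewrite /accuracy RdivE.
have : (#|[set i | classify ww th b xs i == yy i]|%:R : R) <= 2%:R by rewrite ler_nat.
move: (#|_|%:R) => k Hk2.
have -> : (3%:R : R) = 3 by []. lra.
Qed.
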